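(* Let $k\ge 1$ be an integer. In the power series expansions (in $y,z,q$) of $$\frac{1}{(yq;q)_\infty}\sum_{n\ge 0}\frac{(-1)^n y^n q^{n(n+1)/2} (z;q^k)_n}{(q;q)_n}$$ and of $$(-yq;q)_\infty \sum_{n\ge 0}\frac{(-1)^n y^n q^n (z;q^k)_n}{(q;q)_n},$$ the coefficient of $y^\ell z^m q^n$ is nonnegative for all $\ell,m,n$.
   Context: The $q$-Pochhammer symbol is $(A;q)_n=\prod_{j=0}^{n-1}(1-Aq^j)$ for $n\in\mathbb{N}\cup\{\infty\}$. *)

(* Defs.v *)
(* Formal power series in three variables y, z, q with
   integer coefficients, represented by their coefficient function:
   F l m n = coefficient of y^l z^m q^n. *)
From mathcomp Require Import all_boot all_algebra.
Set Implicit Arguments. Unset Strict Implicit. Unset Printing Implicit Defensive.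
Import GRing.Theory.
Local Open Scope ring_scope.

Definition series := nat -> nat -> nat -> int.

Definition s_zero : series := fun _ _ _ => 0.
Definition s_add (F G : series) : series := fun l m n => F l m n + G l m n.
Definition s_opp (F : series) : series := fun l m n => - F l m n.
Definition s_mul (F G : series) : series := fun l m n =>
  \sum_(a < l.+1) \sum_(b < m.+1) \sum_(c < n.+1)
     F a b c * G (l - a)%N (m - b)%N (n - c)%N.
Definition s_mono (c : int) (i j e : nat) : series := fun l m n =>
  if [&& l == i, m == j & n == e] then c else 0.
Definition s_one : series := s_mono 1 0 0 0.
Definition s_y : series := s_mono 1 1 0 0.
Definition s_z : series := s_mono 1 0 1 0.
Definition s_q (e : nat) : series := s_mono 1 0 0 e.
Definition s_pow (F : series) (i : nat) : series := iter i (s_mul F) s_one.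

(* This is the q-adic limit whenever S_N and S_(N+1)
   agree modulo q^(N+1) (all uses below are of this kind). *)
Definition qlim (S : nat -> series) : series := fun l m n => S n.+1 l m n.

(* multiplicative inverse of a series F with F = 1 mod q:
   1/F = sum_(i >= 0) (1 - F)^i  (q-adically convergent) *)
Definition s_inv (F : series) : series :=
  qlim (fun N => \big[s_add/s_zero]_(i < N) s_pow (s_add s_one (s_opp F)) i).

Definition qpoch (A : series) (b N : nat) : series :=
  \big[s_mul/s_one]_(j < N) s_add s_one (s_opp (s_mul A (s_q (b * j)))).
(* (A; q^b)_oo, for A = 0 mod q and b >= 1 *)
Definition qpoch_inf (A : series) (b : nat) : series := qlim (qpoch A b).

Definition series1 (k : nat) : series :=
  s_mul (s_inv (qpoch_inf (s_mul s_y (s_q 1)) 1))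
    (qlim (fun N => \big[s_add/s_zero]_(n < N)
       s_mul (s_mono ((-1) ^+ n) n 0 ((n * n.+1)./2))
             (s_mul (qpoch s_z k n) (s_inv (qpoch (s_q 1) 1 n))))).

Definition series2 (k : nat) : series :=
  s_mul (qpoch_inf (s_opp (s_mul s_y (s_q 1))) 1)
    (qlim (fun N => \big[s_add/s_zero]_(n < N)
       s_mul (s_mono ((-1) ^+ n) n 0 n)
             (s_mul (qpoch s_z k n) (s_inv (qpoch (s_q 1) 1 n))))).

(* Main.v *)
Require Import Defs.
From HB Require Import structures.
From mathcomp Require Import all_boot all_algebra.
From mathcomp Require Import boolp.
From mathcomp Require Import ring.
From mathcomp Require Import zify.
Set Implicit Arguments. Unset Strict Implicit. Unset Printing Implicit Defensive.
Import GRing.Theory.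
Local Open Scope ring_scope.

Notation S := series.
HB.instance Definition _ := Choice.on series.

Lemma s_addA : associative (s_add : S -> S -> S).
Proof. by move=> F G H; apply/funext=> l; apply/funext=> m; apply/funext=> n; rewrite /s_add addrA. Qed.
Lemma s_addC : commutative (s_add : S -> S -> S).
Proof. by move=> F G; apply/funext=> l; apply/funext=> m; apply/funext=> n; rewrite /s_add addrC. Qed.
Lemma s_add0 : left_id (s_zero : S) s_add.
Proof. by move=> F; apply/funext=> l; apply/funext=> m; apply/funext=> n; rewrite /s_add /s_zero add0r. Qed.
Lemma s_addN : left_inverse (s_zero : S) s_opp s_add.
Proof. by move=> F; apply/funext=> l; apply/funext=> m; apply/funext=> n; rewrite /s_add /s_zero /s_opp addNr. Qed.
HB.instance Definition _ := GRing.isZmodule.Build S s_addA s_addC s_add0 s_addN.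

Definition coef3 (P : {poly {poly {poly int}}}) : series := fun l m n => P`_l`_m`_n.
Lemma coef3M P Q l m n : coef3 (P * Q) l m n = s_mul (coef3 P) (coef3 Q) l m n.
Proof.
rewrite /coef3 /s_mul coefM coef_sum coef_sum; apply: eq_bigr => a _.
rewrite coefM coef_sum; apply: eq_bigr => b _.
by rewrite coefM.
Qed.

Definition box l m n (F G : series) := forall a b c, (a <= l)%N -> (b <= m)%N -> (c <= n)%N -> F a b c = G a b c.

Lemma s_mul_box l m n F F' G G' : box l m n F F' -> box l m n G G' ->
  s_mul F G l m n = s_mul F' G' l m n.
Proof.
move=> hF hG; rewrite /s_mul; apply: eq_bigr => a _; apply: eq_bigr => b _; apply: eq_bigr => c _.
rewrite hF; try by rewrite -ltnS.
by rewrite hG ?leq_subr.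
Qed.

Lemma s_mul_boxb l m n F F' G G' : box l m n F F' -> box l m n G G' ->
  box l m n (s_mul F G) (s_mul F' G').
Proof.
move=> hF hG a b c ha hb hc; apply: s_mul_box => a' b' c' ha' hb' hc'.
  by apply: hF; [apply: leq_trans ha' ha|apply: leq_trans hb' hb|apply: leq_trans hc' hc].
by apply: hG; [apply: leq_trans ha' ha|apply: leq_trans hb' hb|apply: leq_trans hc' hc].
Qed.

Definition T3 (F : series) N : {poly {poly {poly int}}} :=
  \poly_(a < N) \poly_(b < N) \poly_(c < N) F a b c.

Lemma coef3T F N l m n : (l < N)%N -> (m < N)%N -> (n < N)%N -> coef3 (T3 F N) l m n = F l m n.
Proof. by move=> hl hm hn; rewrite /coef3 /T3 coef_poly hl coef_poly hm coef_poly hn. Qed.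

Lemma boxT F l m n : box l m n F (coef3 (T3 F (l+m+n).+1)).
Proof.
move=> a b c ha hb hc; rewrite coef3T // ltnS.
- by apply: leq_trans ha _; rewrite -addnA leq_addr.
- by apply: leq_trans hb _; rewrite addnAC leq_addl.
- by apply: leq_trans hc _; rewrite leq_addl.
Qed.

Lemma boxr l m n F : box l m n F F. Proof. by []. Qed.

Lemma s_mulA : associative (s_mul : S -> S -> S).
Proof.
move=> F G H; apply/funext=> l; apply/funext=> m; apply/funext=> n.
have hF := @boxT F l m n; have hG := @boxT G l m n; have hH := @boxT H l m n.
rewrite (s_mul_box hF (s_mul_boxb hG hH)) (s_mul_box (s_mul_boxb hF hG) hH).
set N := (l+m+n).+1.
rewrite (s_mul_box (@boxr _ _ _ _) (fun a b c _ _ _ => esym (coef3M _ _ a b c))).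
rewrite (s_mul_box (fun a b c _ _ _ => esym (coef3M _ _ a b c)) (@boxr _ _ _ _)).
by rewrite -!coef3M mulrA.
Qed.

Lemma s_mulC : commutative (s_mul : S -> S -> S).
Proof.
move=> F G; apply/funext=> l; apply/funext=> m; apply/funext=> n.
have hF := @boxT F l m n; have hG := @boxT G l m n.
by rewrite (s_mul_box hF hG) (s_mul_box hG hF) -!coef3M mulrC.
Qed.

Lemma coef3_1 : coef3 1 = s_one.
Proof.
apply/funext=> l; apply/funext=> m; apply/funext=> n.
rewrite /coef3 /s_one /s_mono coef1; case: l => [|l] /=; last by rewrite !coef0.
rewrite coef1; case: m => [|m] /=; last by rewrite coef0.
by rewrite coef1; case: n.
Qed.

Lemma s_mul1 : left_id (s_one : S) s_mul.
Proof.
move=> F; apply/funext=> l; apply/funext=> m; apply/funext=> n.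
have hF := @boxT F l m n.
rewrite -coef3_1 (s_mul_box (@boxr _ _ _ _) hF) -coef3M mul1r.
by rewrite -hF.
Qed.

Lemma s_mulDl : left_distributive (s_mul : S -> S -> S) s_add.
Proof.
move=> F G H; apply/funext=> l; apply/funext=> m; apply/funext=> n.
rewrite /s_mul /s_add -big_split /=; apply: eq_bigr => a _.
rewrite -big_split /=; apply: eq_bigr => b _.
rewrite -big_split /=; apply: eq_bigr => c _.
by rewrite mulrDl.
Qed.

HB.instance Definition _ := GRing.Zmodule_isComPzRing.Build S s_mulA s_mulC s_mul1 s_mulDl.
Lemma coef3M' P Q : coef3 (P * Q) = s_mul (coef3 P) (coef3 Q).
Proof. by apply/funext=> l; apply/funext=> m; apply/funext=> n; rewrite coef3M. Qed.

Lemma mulE (F G : S) : s_mul F G = F * G. Proof. by []. Qed.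
Lemma addE (F G : S) : s_add F G = F + G. Proof. by []. Qed.
Lemma oppE (F : S) : s_opp F = - F. Proof. by []. Qed.
Lemma oneE : s_one = 1 :> S. Proof. by []. Qed.
Lemma zeroE : s_zero = 0 :> S. Proof. by []. Qed.
Lemma addP (F G : S) l m n : (F + G) l m n = F l m n + G l m n. Proof. by []. Qed.
Lemma oppP (F : S) l m n : (- F) l m n = - F l m n. Proof. by []. Qed.
Lemma subP (F G : S) l m n : (F - G) l m n = F l m n - G l m n. Proof. by []. Qed.
Lemma zeroP l m n : (0 : S) l m n = 0. Proof. by []. Qed.
Lemma sumP I (r : seq I) (P : pred I) (f : I -> S) l m n :
  (\sum_(i <- r | P i) f i) l m n = \sum_(i <- r | P i) f i l m n.
Proof. by elim/big_rec2: _ => // i x y _ <-. Qed.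

(* substitution y -> y q^a *)
Definition sig (a : nat) (F : S) : S := fun l m n =>
  if (a * l <= n)%N then F l m (n - a * l)%N else 0.

Definition cq a : {poly {poly int}} := ('X^a)%:P.
Definition sigP a (P : {poly {poly {poly int}}}) := \poly_(l < size P) (P`_l * cq a ^+ l).

Lemma coef_sigP a P l : (sigP a P)`_l = P`_l * cq a ^+ l.
Proof.
rewrite /sigP coef_poly; case: ltnP => // h.
by rewrite nth_default // mul0r.
Qed.

Lemma sigP_mul a P Q : sigP a (P * Q) = sigP a P * sigP a Q.
Proof.
apply/polyP => l; rewrite coef_sigP !coefM big_distrl; apply: eq_bigr => i _.
rewrite !coef_sigP.
have hi : (i <= l)%N by rewrite -ltnS.
rewrite (_ : cq a ^+ l = cq a ^+ i * cq a ^+ (l - i)); last by rewrite -exprD subnKC.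
by rewrite mulrACA.
Qed.

Lemma coef3_sigP a P : coef3 (sigP a P) = sig a (coef3 P).
Proof.
apply/funext=> l; apply/funext=> m; apply/funext=> n.
rewrite /coef3 /sig coef_sigP /cq -rmorphXn -exprM coefMC coefMXn.
by case: leqP => h; rewrite ?ltnNge ?h // mulnC.
Qed.

Lemma sig_box a l m n F F' : box l m n F F' -> box l m n (sig a F) (sig a F').
Proof.
move=> h a' b c ha hb hc; rewrite /sig; case: ifP => // _.
by apply: h => //; apply: leq_trans (leq_subr _ _) hc.
Qed.

Lemma sig_mul a (F G : S) : sig a (F * G) = sig a F * sig a G.
Proof.
apply/funext=> l; apply/funext=> m; apply/funext=> n.
have hF := @boxT F l m n; have hG := @boxT G l m n.
set N := (l+m+n).+1 in hF hG.
rewrite (sig_box a (s_mul_boxb hF hG)) // -coef3M' -coef3_sigP sigP_mul coef3M.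
rewrite !coef3_sigP.
by symmetry; apply: s_mul_box; apply: sig_box.
Qed.

Lemma sig_sub a : zmod_morphism (sig a).
Proof.
move=> F G; apply/funext=> l; apply/funext=> m; apply/funext=> n.
rewrite [RHS]subP /sig /=; case: ifP => _; rewrite ?subrr // subP.
Qed.

Lemma sig1 a : sig a 1 = 1.
Proof.
apply/funext=> l; apply/funext=> m; apply/funext=> n.
rewrite /sig; case: l => [|l]; rewrite ?muln0 ?subn0 //.
by case: ifP.
Qed.

HB.instance Definition _ a := GRing.isZmodMorphism.Build S S (sig a) (sig_sub a).
HB.instance Definition _ a := GRing.isMonoidMorphism.Build S S (sig a) (sig1 a, sig_mul a).

Lemma test a (F G : S) : sig a (F * G - 1) = sig a F * sig a G - 1.
Proof. by rewrite rmorphB rmorphM rmorph1. Qed.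

Lemma sum_one n i (hi : (i < n)%N) (H : 'I_n -> int) :
  (forall a : 'I_n, nat_of_ord a != i -> H a = 0) -> \sum_(a < n) H a = H (Ordinal hi).
Proof.
move=> h; rewrite (bigD1 (Ordinal hi)) //= big1 ?addr0 // => a ne.
Qed.

Lemma sum_zero n i (hi : (i < n)%N = false) (H : 'I_n -> int) :
  (forall a : 'I_n, nat_of_ord a != i -> H a = 0) -> \sum_(a < n) H a = 0.
Proof.
move=> h; rewrite big1 // => a _; apply: h; apply/eqP => e.
by move: (ltn_ord a); rewrite e hi.
Qed.

Lemma mono_mulE c i j e (G : S) l m n : ((s_mono c i j e : S) * G) l m n =
  if [&& (i <= l)%N, (j <= m)%N & (e <= n)%N] then c * G (l-i)%N (m-j)%N (n-e)%N else 0.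
Proof.
rewrite -mulE /s_mul /s_mono.
case h1: (i <= l)%N; last first.
  rewrite (@sum_zero _ i) // ?ltnS // => a /negbTE ne.
  by apply: big1 => b _; apply: big1 => c' _; rewrite ne mul0r.
have hi : (i < l.+1)%N by rewrite ltnS.
rewrite (sum_one hi) => [|a /negbTE ne]; last first.
  by apply: big1 => b _; apply: big1 => c' _; rewrite ne mul0r.
case h2: (j <= m)%N; last first.
  rewrite (@sum_zero _ j) // ?ltnS // => b /negbTE ne.
  by apply: big1 => c' _; rewrite ne andbF mul0r.
have hj : (j < m.+1)%N by rewrite ltnS.
rewrite (sum_one hj) => [|b /negbTE ne]; last first.
  by apply: big1 => c' _; rewrite ne andbF mul0r.
case h3: (e <= n)%N; last first.
  by rewrite (@sum_zero _ e) // ?ltnS // => c' /negbTE ne; rewrite ne !andbF mul0r.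
have he : (e < n.+1)%N by rewrite ltnS.
rewrite (sum_one he) => [|c' /negbTE ne]; last by rewrite ne !andbF mul0r.
by rewrite /= !eqxx.
Qed.

Lemma key1 x a b : (a <= x)%N -> (x - a == b)%N = (x == a + b)%N.
Proof. by move=> h; apply/eqP/eqP => [<-|->]; rewrite ?subnKC ?addKn. Qed.
Lemma key2 x a b : (a <= x)%N = false -> (x == a + b)%N = false.
Proof. by move=> h; apply/negbTE; move: h; apply: contraFN => /eqP ->; rewrite leq_addr. Qed.

Lemma mono_mul c i j e c' i' j' e' :
  (s_mono c i j e : S) * s_mono c' i' j' e' = s_mono (c * c') (i + i') (j + j') (e + e') :> S.
Proof.
apply/funext=> l; apply/funext=> m; apply/funext=> n.
rewrite mono_mulE {2}/s_mono.
case h1: (i <= l)%N; last by rewrite (key2 _ h1) /=.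
case h2: (j <= m)%N; last by rewrite (key2 _ h2) /= ?andbF.
case h3: (e <= n)%N; last by rewrite (key2 _ h3) /= ?andbF.
by rewrite /= /s_mono (key1 _ h1) (key1 _ h2) (key1 _ h3); case: ifP; rewrite ?mulr0.
Qed.

Lemma mono_add c c' i j e : (s_mono c i j e : S) + s_mono c' i j e = s_mono (c + c') i j e :> S.
Proof.
apply/funext=> l; apply/funext=> m; apply/funext=> n.
by rewrite addP /s_mono; case: ifP; rewrite ?addr0.
Qed.

Lemma mono_opp c i j e : - (s_mono c i j e : S) = s_mono (- c) i j e.
Proof.
apply/funext=> l; apply/funext=> m; apply/funext=> n.
by rewrite oppP /s_mono; case: ifP; rewrite ?oppr0.
Qed.

Lemma mono1 : s_mono 1 0 0 0 = 1 :> S. Proof. by []. Qed.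

Lemma sig_mono a c i j e : sig a (s_mono c i j e) = s_mono c i j (e + a * i).
Proof.
apply/funext=> l; apply/funext=> m; apply/funext=> n.
rewrite /sig /s_mono.
case: (eqVneq l i) => [->|ne] /=; last by case: ifP.
case: (eqVneq m j) => [_|ne] /=; last by case: ifP.
case: leqP => h; first by rewrite addnC key1.
case: eqP => // he; move: h; rewrite he; lia.
Qed.

Definition eqm N (F G : S) := forall l m n, (n < N)%N -> F l m n = G l m n.

Lemma eqm_refl N F : eqm N F F. Proof. by []. Qed.
Lemma eqm_sym N F G : eqm N F G -> eqm N G F.
Proof. by move=> h l m n hn; rewrite h. Qed.
Lemma eqm_trans N F G H : eqm N F G -> eqm N G H -> eqm N F H.
Proof. by move=> h1 h2 l m n hn; rewrite h1 ?h2. Qed.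
Lemma eqm_le N N' F G : (N' <= N)%N -> eqm N F G -> eqm N' F G.
Proof. by move=> hN h l m n hn; apply: h; apply: leq_trans hn hN. Qed.
Lemma eqm_add N F F' G G' : eqm N F F' -> eqm N G G' -> eqm N (F + G) (F' + G').
Proof. by move=> h1 h2 l m n hn; rewrite !addP h1 ?h2. Qed.
Lemma eqm_opp N F F' : eqm N F F' -> eqm N (- F) (- F').
Proof. by move=> h1 l m n hn; rewrite !oppP h1. Qed.
Lemma eqm_sub N F F' G G' : eqm N F F' -> eqm N G G' -> eqm N (F - G) (F' - G').
Proof. by move=> h1 h2; apply: eqm_add => //; apply: eqm_opp. Qed.
Lemma eqm_mul N F F' G G' : eqm N F F' -> eqm N G G' -> eqm N (F * G) (F' * G').
Proof.
move=> h1 h2 l m n hn; rewrite -!mulE /s_mul; apply: eq_bigr => a _; apply: eq_bigr => b _.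
apply: eq_bigr => c _; rewrite h1 ?h2 //.
  by apply: leq_ltn_trans (leq_subr _ _) hn.
by apply: leq_ltn_trans hn; rewrite -ltnS.
Qed.
Lemma eqm_sig N a F F' : eqm N F F' -> eqm N (sig a F) (sig a F').
Proof.
move=> h l m n hn; rewrite /sig; case: ifP => // _; rewrite h //.
by apply: leq_ltn_trans (leq_subr _ _) hn.
Qed.
Lemma eqm_ext F G : (forall N, eqm N F G) -> F = G.
Proof.
move=> h; apply/funext=> l; apply/funext=> m; apply/funext=> n.
exact: (h n.+1).
Qed.
Lemma eqm_mul0 d e F G : eqm d F 0 -> eqm e G 0 -> eqm (d + e) (F * G) 0.
Proof.
move=> h1 h2 l m n hn; rewrite -mulE /s_mul zeroP; apply: big1 => a _; apply: big1 => b _.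
apply: big1 => c hc; case: (ltnP c d) => hcd; first by rewrite h1 // zeroP mul0r.
rewrite h2 ?zeroP ?mulr0 //.
move: hn hcd (ltn_ord c); lia.
Qed.
Lemma eqm_mono c i j e : eqm e (s_mono c i j e : S) 0.
Proof.
move=> l m n hn; rewrite zeroP /s_mono; case: ifP => // /and3P [_ _ /eqP he].
by move: hn; rewrite he ltnn.
Qed.
Lemma eqm0 F G : eqm 0 F G. Proof. by []. Qed.

Lemma eqm_sum N I (r : seq I) (P : pred I) (f g : I -> S) :
  (forall i, P i -> eqm N (f i) (g i)) -> eqm N (\sum_(i <- r | P i) f i) (\sum_(i <- r | P i) g i).
Proof.
move=> h; elim/big_rec2: _ => // i x y Pi hxy; exact: eqm_add (h i Pi) hxy.
Qed.
Lemma eqm_prod N I (r : seq I) (P : pred I) (f g : I -> S) :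
  (forall i, P i -> eqm N (f i) (g i)) -> eqm N (\prod_(i <- r | P i) f i) (\prod_(i <- r | P i) g i).
Proof.
move=> h; elim/big_rec2: _ => // i x y Pi hxy; exact: eqm_mul (h i Pi) hxy.
Qed.

Lemma qlimE (Sq : nat -> S) : (forall N, eqm N (Sq N) (Sq N.+1)) ->
  forall N, eqm N (qlim Sq : S) (Sq N).
Proof.
move=> h.
have c : forall N d, eqm N (Sq N) (Sq (N + d)%N).
  move=> N; elim=> [|d IH]; first by rewrite addn0.
  apply: eqm_trans IH _; rewrite addnS; apply: eqm_le (h _); exact: leq_addr.
move=> N l m n hn; rewrite /qlim (c n.+1 (N - n.+1)%N) ?subnKC //.
Qed.

Lemma s_powE (X : S) i : s_pow X i = X ^+ i.
Proof. by elim: i => // i IH; rewrite exprS -IH. Qed.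

Lemma s_invE (F : S) : s_inv F = qlim (fun N => \sum_(i < N) (1 - F) ^+ i).
Proof.
rewrite /s_inv; congr qlim; apply/funext => N.
by apply: eq_bigr => i _; rewrite s_powE.
Qed.

Lemma s_invP (F : S) : eqm 1 F 1 -> s_inv F * F = 1.
Proof.
move=> h; set G := 1 - F.
have hG : eqm 1 G 0 by rewrite /G -(subrr 1); apply: eqm_sub => //; apply: eqm_sym.
have hGi : forall i, eqm i (G ^+ i) 0.
  elim=> [|i IH]; first exact: eqm0.
  by rewrite exprS -add1n; apply: eqm_mul0.
have hF : F = 1 - G by rewrite /G opprB addrC subrK.
have tel : forall N, (\sum_(i < N) G ^+ i) * (1 - G) = 1 - G ^+ N.
  elim=> [|N IH]; first by rewrite big_ord0 mul0r expr0 subrr.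
  by rewrite big_ord_recr /= mulrDl IH exprS; ring.
apply: eqm_ext => N.
rewrite s_invE.
apply: (@eqm_trans _ _ ((\sum_(i < N) G ^+ i) * F)).
  apply: eqm_mul => //; apply: qlimE => M.
  rewrite big_ord_recr /= -{1}(addr0 (\sum_(i < M) _)).
  by apply: eqm_add => //; apply: eqm_sym.
rewrite hF tel -{2}(subr0 1); apply: eqm_sub => //.
Qed.

Lemma inv_unique (X Y F : S) : X * F = 1 -> Y * F = 1 -> X = Y.
Proof. by move=> h1 h2; rewrite -(mulr1 X) -h2 mulrCA h1 mulr1. Qed.
Unset Implicit Arguments.
Import Num.Theory.

Lemma sig0 F : sig 0 F = F.
Proof.
apply/funext=> l; apply/funext=> m; apply/funext=> n.
by rewrite /sig mul0n subn0.
Qed.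

Lemma sig_sig a b F : sig a (sig b F) = sig (a + b) F.
Proof.
apply/funext=> l; apply/funext=> m; apply/funext=> n.
rewrite /sig mulnDl.
case: (leqP (a * l) n) => h1.
  case: (leqP (b * l) (n - a * l)) => h2.
    by rewrite (_ : (a * l + b * l <= n)%N = true) ?subnDA //; apply/idP; lia.
  by rewrite (_ : (a * l + b * l <= n)%N = false) //; apply/idP; lia.
by rewrite (_ : (a * l + b * l <= n)%N = false) //; apply/idP; lia.
Qed.

Lemma qpochE (A : S) b N : qpoch A b N = \prod_(j < N) (1 - A * s_q (b * j)).
Proof. by []. Qed.

Lemma qpoch_rec (A : S) b N : qpoch A b N.+1 = qpoch A b N * (1 - A * s_q (b * N)).
Proof. by rewrite !qpochE big_ord_recr. Qed.

Lemma qpoch_cauchy (A : S) b : eqm 1 A 0 -> (1 <= b)%N ->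
  forall N, eqm N (qpoch A b N) (qpoch A b N.+1).
Proof.
move=> hA hb N; rewrite qpoch_rec -{1}(mulr1 (qpoch A b N)).
apply: eqm_mul => //; rewrite -{1}(subr0 1); apply: eqm_sub => //.
apply: eqm_sym; apply: (@eqm_le (1 + b * N)).
  by move: hb; nia.
by apply: eqm_mul0 => //; apply: eqm_mono.
Qed.

Lemma qpoch_inf_eqm (A : S) b : eqm 1 A 0 -> (1 <= b)%N ->
  forall N, eqm N (qpoch_inf A b) (qpoch A b N).
Proof. by move=> hA hb; apply: qlimE; apply: qpoch_cauchy. Qed.

Definition Qp (c : int) N : S := \prod_(j < N) (1 - s_mono c 1 0 j.+1).

Lemma qpoch_Qp c N : qpoch (s_mono c 1 0 1) 1 N = Qp c N.
Proof.
rewrite qpochE /Qp; apply: eq_bigr => j _.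
by rewrite mono_mul mulr1 mul1n.
Qed.

Lemma Qp_rec c N : Qp c N.+1 = Qp c N * (1 - s_mono c 1 0 N.+1).
Proof. by rewrite /Qp big_ord_recr. Qed.

Lemma sig_Qp a c N : sig a (Qp c N) = \prod_(j < N) (1 - s_mono c 1 0 (j.+1 + a)).
Proof.
rewrite /Qp rmorph_prod; apply: eq_bigr => j _.
by rewrite rmorphB rmorph1 /= sig_mono muln1.
Qed.

Definition Qinf (c : int) : S := qpoch_inf (s_mono c 1 0 1) 1.

Lemma eqm1_mono c : eqm 1 (s_mono c 1 0 1 : S) 0.
Proof. exact: eqm_mono. Qed.

Lemma Qinf_eqm c N : eqm N (Qinf c) (Qp c N).
Proof. by rewrite -qpoch_Qp; apply: qpoch_inf_eqm => //; apply: eqm1_mono. Qed.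

Lemma Qinf_fun c : Qinf c = (1 - s_mono c 1 0 1) * sig 1 (Qinf c).
Proof.
apply: eqm_ext => N.
apply: eqm_trans (Qinf_eqm c N) _.
apply: (@eqm_trans _ _ (Qp c N.+1)).
  rewrite -!qpoch_Qp; apply: qpoch_cauchy => //; apply: eqm1_mono.
rewrite /Qp big_ord_recl.
apply: eqm_mul => //.
rewrite -/(Qp c N) (_ : \prod_(i < N) _ = sig 1 (Qp c N)).
  by apply: eqm_sig; apply: eqm_sym; apply: Qinf_eqm.
by rewrite sig_Qp; apply: eq_bigr => j _; rewrite addn1.
Qed.

Lemma Qinf_sig c a : Qinf c = Qp c a * sig a (Qinf c).
Proof.
elim: a => [|a IH]; first by rewrite /Qp big_ord0 mul1r sig0.
rewrite Qp_rec -mulrA {1}IH; congr (_ * _).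
rewrite {1}Qinf_fun rmorphM rmorphB rmorph1 /= sig_mono sig_sig muln1 addn1.
by rewrite add1n.
Qed.

Lemma Qinf_eqm1 c : eqm 1 (Qinf c) 1.
Proof.
apply: eqm_trans (Qinf_eqm c 1) _.
rewrite /Qp big_ord1 -{2}(subr0 1); apply: eqm_sub => //; apply: eqm1_mono.
Qed.

Definition eqy (F G : S) := forall m n, F 0 m n = G 0 m n.
Lemma eqy_mul F F' G G' : eqy F F' -> eqy G G' -> eqy (F * G) (F' * G').
Proof.
move=> h1 h2 m n; rewrite -!mulE /s_mul !big_ord1; apply: eq_bigr => b _.
by apply: eq_bigr => c _; rewrite /= h1 h2.
Qed.
Lemma eqy_prod I (r : seq I) (P : pred I) (f g : I -> S) :
  (forall i, P i -> eqy (f i) (g i)) -> eqy (\prod_(i <- r | P i) f i) (\prod_(i <- r | P i) g i).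
Proof.
move=> h; elim/big_rec2: _ => // i x y Pi hxy; exact: eqy_mul (h i Pi) hxy.
Qed.
Lemma eqy_Qp c N : eqy (Qp c N) 1.
Proof.
elim: N => [|N IH] m n; first by rewrite /Qp big_ord0.
rewrite Qp_rec (@eqy_mul _ 1 _ 1 IH) ?mulr1 // => m' n'.
by rewrite subP /s_mono /= subr0.
Qed.
Lemma eqy_Qinf c : eqy (Qinf c) 1.
Proof.
move=> m n; rewrite (Qinf_eqm c n.+1) //; exact: eqy_Qp.
Qed.

Definition nonneg (F : S) := forall l m n, 0 <= F l m n.
Lemma nonneg_mul F G : nonneg F -> nonneg G -> nonneg (F * G).
Proof.
move=> h1 h2 l m n; rewrite -mulE /s_mul.
by do 3 (apply: sumr_ge0 => ? _); apply: mulr_ge0.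
Qed.
Lemma nonneg_add F G : nonneg F -> nonneg G -> nonneg (F + G).
Proof. by move=> h1 h2 l m n; rewrite addP addr_ge0. Qed.
Lemma nonneg_mono c i j e : 0 <= c -> nonneg (s_mono c i j e).
Proof. by move=> h l m n; rewrite /s_mono; case: ifP. Qed.
Lemma nonneg1 : nonneg 1. Proof. exact: nonneg_mono. Qed.
Lemma nonneg_prod I (r : seq I) (P : pred I) (f : I -> S) :
  (forall i, P i -> nonneg (f i)) -> nonneg (\prod_(i <- r | P i) f i).
Proof. by move=> h; apply: big_ind => //; [exact: nonneg1|exact: nonneg_mul]. Qed.
Lemma nonneg_sig a F : nonneg F -> nonneg (sig a F).
Proof. by move=> h l m n; rewrite /sig; case: ifP. Qed.

(* geometric series 1/(1 - y q^e) *)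
Definition geo e : S := fun l m n => if (m == 0%N) && (n == e * l)%N then 1 else 0.
Lemma nonneg_geo e : nonneg (geo e).
Proof. by move=> l m n; rewrite /geo; case: ifP. Qed.
Lemma geoP e : geo e * (1 - s_mono 1 1 0 e) = 1.
Proof.
apply/funext=> l; apply/funext=> m; apply/funext=> n.
rewrite mulrBr mulr1 subP mulrC mono_mulE /geo /=.
case: l => [|l] /=.
  by rewrite muln0 subr0 /s_one /s_mono.
rewrite subn0 subn1 /= mul1r.
have -> : (1 : S) l.+1 m n = 0 by [].
case: (leqP e n) => h.
  by rewrite (key1 _ h) mulnS; case: ifP; rewrite subrr.
have h' : (e <= n)%N = false by apply/negbTE; rewrite -ltnNge.
by rewrite mulnS (key2 _ h') andbF subr0.
Qed.

Definition Hinv a : S := \prod_(j < a) geo j.+1.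
Lemma Hinv_nonneg a : nonneg (Hinv a).
Proof. by apply: nonneg_prod => j _; apply: nonneg_geo. Qed.
Lemma HinvP a : Hinv a * Qp 1 a = 1.
Proof.
rewrite /Hinv /Qp -big_split /=; apply: big1 => j _; exact: geoP.
Qed.

Lemma final_ind (B H : S) a : (forall m n, 0 <= B 0%N m n) -> nonneg H ->
  B = sig 1 B + H * (s_mono 1 1 1 1 * sig a B) -> nonneg B.
Proof.
move=> h0 hH hB l; elim/ltn_ind: l => l IHl.
case: l IHl => [|l] IHl; first exact: h0.
move=> m n; elim/ltn_ind: n => n IHn.
rewrite hB addP; apply: addr_ge0.
  rewrite /sig mul1n; case: leqP => // hl; apply: IHn.
  by move: hl; lia.
rewrite -mulE /s_mul; do 3 (apply: sumr_ge0 => ? _); apply: mulr_ge0 => //.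
rewrite mono_mulE; case: ifP => // /and3P [h1 _ _]; rewrite mul1r /sig.
case: ifP => // _; apply: IHl.
by move: h1; lia.
Qed.

Lemma funeq_gen (t : nat -> S) (L : S -> S) (d : nat -> S) :
  (forall N, eqm N (t N) 0) ->
  (forall X Y, L (X + Y) = L X + L Y) -> L 0 = 0 ->
  (forall N X X', eqm N X X' -> eqm N (L X) (L X')) ->
  (forall M, \sum_(n < M.+1) L (t n) = d M) ->
  (forall M, eqm M.+1 (d M) 0) ->
  L (qlim (fun N => \sum_(n < N) t n)) = 0.
Proof.
move=> ht Ladd L0 Lc hs hd.
have Lsum : forall N, L (\sum_(n < N) t n) = \sum_(n < N) L (t n).
  elim=> [|N IH]; first by rewrite !big_ord0.
  by rewrite !big_ord_recr Ladd IH.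
have hc : forall N, eqm N (\sum_(n < N) t n) (\sum_(n < N.+1) t n).
  move=> N; rewrite big_ord_recr -{1}(addr0 (\sum_(i < N) t i)).
  by apply: eqm_add => //; apply: eqm_sym.
apply: eqm_ext => N; case: N => [|M]; first exact: eqm0.
apply: eqm_trans (Lc _ _ _ (@qlimE _ hc M.+1)) _.
by rewrite Lsum hs; apply: hd.
Qed.

Definition qq e : S := s_mono 1 0 0 e.
Definition Yq : S := s_mono 1 1 0 1.
Definition Zm : S := s_mono 1 0 1 0.

Lemma qqD a b : qq (a + b) = qq a * qq b.
Proof. by rewrite /qq mono_mul mulr1. Qed.
Lemma qq0 : qq 0 = 1. Proof. by []. Qed.

Lemma sig_yfree a c j e : sig a (s_mono c 0 j e) = s_mono c 0 j e.
Proof. by rewrite sig_mono muln0 addn0. Qed.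

Section Coef.
Variable k : nat.

Definition cz n : S := qpoch s_z k n.
Definition W n : S := qpoch (s_q 1) 1 n.
Definition I n : S := s_inv (W n).
Definition K n : S := cz n * I n.

Lemma W_rec n : W n.+1 = W n * (1 - qq n.+1).
Proof. by rewrite /W qpoch_rec /s_q mono_mul mulr1 mul1n add1n. Qed.

Lemma W_eqm n : eqm 1 (W n) 1.
Proof.
elim: n => [|n IH]; first by rewrite /W qpochE big_ord0.
have h : eqm 1 (1 - qq n.+1) (1 - 0).
  by apply: eqm_sub => //; apply: (@eqm_le n.+1) => //; exact: eqm_mono.
rewrite subr0 in h.
by move: (eqm_mul IH h); rewrite mulr1 W_rec.
Qed.

Lemma IW n : I n * W n = 1.
Proof. exact: s_invP (W_eqm n). Qed.

Lemma I_rec n : I n.+1 * (1 - qq n.+1) = I n.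
Proof.
apply: (@inv_unique _ _ (W n)); last exact: IW.
by rewrite -mulrA [_ * W n]mulrC -W_rec IW.
Qed.

Lemma cz_rec n : cz n.+1 = cz n * (1 - Zm * qq (k * n)).
Proof. by rewrite /cz qpoch_rec. Qed.

Lemma K_rec n : K n.+1 * (1 - qq n.+1) = (1 - Zm * qq (k * n)) * K n.
Proof. by rewrite /K cz_rec -mulrA I_rec; ring. Qed.

Lemma sig_cz a n : sig a (cz n) = cz n.
Proof.
rewrite /cz qpochE rmorph_prod; apply: eq_bigr => j _.
by rewrite rmorphB rmorph1 /= rmorphM /= /s_z /s_q !sig_yfree.
Qed.

Lemma sig_W a n : sig a (W n) = W n.
Proof.
rewrite /W qpochE rmorph_prod; apply: eq_bigr => j _.
by rewrite rmorphB rmorph1 /= rmorphM /= /s_q !sig_yfree.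
Qed.

Lemma sig_I a n : sig a (I n) = I n.
Proof.
apply: (@inv_unique _ _ (W n)); last exact: IW.
by rewrite -[X in _ * X](sig_W a n) -rmorphM IW rmorph1.
Qed.

Lemma sig_K a n : sig a (K n) = K n.
Proof. by rewrite /K rmorphM /= sig_cz sig_I. Qed.

Lemma K0 : K 0 = 1.
Proof.
rewrite /K /I /cz /W !qpochE !big_ord0 mul1r.
apply: (@inv_unique _ _ 1); last by rewrite mulr1.
by apply: s_invP.
Qed.

End Coef.

Lemma tri n : ((n.+1 * n.+2)./2 = n.+1 + (n * n.+1)./2)%N.
Proof.
rewrite (_ : (n.+1 * n.+2 = (n.+1).*2 + n * n.+1)%N); last by rewrite -muln2; nia.
by rewrite halfD odd_double /= doubleK.
Qed.

Lemma tri_ge n : (n <= (n * n.+1)./2)%N.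
Proof.
rewrite -{1}(doubleK n); apply: half_leq; rewrite -muln2; nia.
Qed.

Section S1.
Variable k : nat.

Definition t1 n : S := s_mono ((-1) ^+ n) n 0 ((n * n.+1)./2) * K k n.

Lemma t1_deg n : eqm n (t1 n) 0.
Proof.
apply: (@eqm_le ((n * n.+1)./2 + 0)); first by rewrite addn0 tri_ge.
rewrite /t1; apply: eqm_mul0; [exact: eqm_mono|exact: eqm0].
Qed.

Lemma mono_t1 n : s_mono ((-1) ^+ n.+1) n.+1 0 ((n.+1 * n.+2)./2) =
  - (Yq * qq n) * s_mono ((-1) ^+ n) n 0 ((n * n.+1)./2) :> S.
Proof.
by rewrite /Yq /qq mono_mul mono_opp mono_mul mulr1 mulN1r exprS mulN1r tri add1n addn0.
Qed.

Lemma t1_rec n : t1 n.+1 * (1 - qq n.+1) =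
  - (Yq * qq n * t1 n) + Yq * Zm * qq ((k + 1) * n) * t1 n.
Proof.
rewrite /t1 mono_t1 -mulrA K_rec mulnDl mul1n qqD.
ring.
Qed.

Lemma sig_t1 a n : sig a (t1 n) = qq (a * n) * t1 n.
Proof.
rewrite /t1 rmorphM /= sig_K sig_mono mulrA /qq mono_mul mul1r add0n addnC.
by [].
Qed.

Definition A1 : S := qlim (fun N => \sum_(n < N) t1 n).

Definition L1 (X : S) : S := X - (1 - Yq) * sig 1 X - Yq * Zm * sig (k + 1) X.
Definition d1 M : S := Yq * qq M * t1 M - Yq * Zm * qq ((k + 1) * M) * t1 M.

Lemma A1_fun : A1 = (1 - Yq) * sig 1 A1 + Yq * Zm * sig (k + 1) A1.
Proof.
apply/eqP; rewrite -subr_eq0 opprD addrA; apply/eqP.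
apply: (@funeq_gen t1 L1 d1).
- exact: t1_deg.
- by move=> X Y; rewrite /L1 !rmorphD /=; ring.
- by rewrite /L1 !rmorph0 /=; ring.
- move=> N X X' h; rewrite /L1; apply: eqm_sub; first apply: eqm_sub => //.
    by apply: eqm_mul => //; apply: eqm_sig.
  by apply: eqm_mul => //; apply: eqm_sig.
- elim=> [|M IH].
    rewrite big_ord1 /L1 /d1 !sig_t1 !muln0 qq0; ring.
  rewrite big_ord_recr IH /= /L1 !sig_t1 mul1n.
  apply/eqP; rewrite -subr_eq0; apply/eqP.
  transitivity (d1 M + t1 M.+1 * (1 - qq M.+1)); first by rewrite /d1; ring.
  by rewrite t1_rec /d1; ring.
- move=> M; rewrite /d1 -(subr0 0); apply: eqm_sub.
    rewrite -mulrA (_ : M.+1 = 1 + (0 + M))%N //.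
    apply: eqm_mul0; first exact: eqm_mono.
    by apply: eqm_mul0; [exact: eqm0|exact: t1_deg].
  rewrite -!mulrA (_ : M.+1 = 1 + (0 + (0 + M)))%N //.
  apply: eqm_mul0; first exact: eqm_mono.
  apply: eqm_mul0; first exact: eqm0.
  by apply: eqm_mul0; [exact: eqm0|exact: t1_deg].
Qed.

End S1.

Section S2.
Variable k : nat.

Definition u n : S := s_mono ((-1) ^+ n) n 0 n * K k n.

Lemma u_deg n : eqm n (u n) 0.
Proof.
apply: (@eqm_le (n + 0)); first by rewrite addn0.
rewrite /u; apply: eqm_mul0; [exact: eqm_mono|exact: eqm0].
Qed.

Lemma mono_u n : s_mono ((-1) ^+ n.+1) n.+1 0 n.+1 =
  - Yq * s_mono ((-1) ^+ n) n 0 n :> S.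
Proof. by rewrite /Yq mono_opp mono_mul mulN1r exprS mulN1r add1n. Qed.

Lemma u_rec n : u n.+1 * (1 - qq n.+1) = - (Yq * u n) + Yq * Zm * qq (k * n) * u n.
Proof. rewrite /u mono_u -mulrA K_rec; ring. Qed.

Lemma sig_u a n : sig a (u n) = qq (a * n) * u n.
Proof.
rewrite /u rmorphM /= sig_K sig_mono mulrA /qq mono_mul mul1r add0n addnC.
by [].
Qed.

Definition A2 : S := qlim (fun N => \sum_(n < N) u n).

Definition L2 (X : S) : S := (1 + Yq) * X - sig 1 X - Yq * Zm * sig k X.
Definition d2 M : S := Yq * u M - Yq * Zm * qq (k * M) * u M.

Lemma A2_fun : (1 + Yq) * A2 = sig 1 A2 + Yq * Zm * sig k A2.
Proof.
apply/eqP; rewrite -subr_eq0 opprD addrA; apply/eqP.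
apply: (@funeq_gen u L2 d2).
- exact: u_deg.
- by move=> X Y; rewrite /L2 !rmorphD /=; ring.
- by rewrite /L2 !rmorph0 /=; ring.
- move=> N X X' h; rewrite /L2; apply: eqm_sub; first apply: eqm_sub => //.
    by apply: eqm_mul.
    by apply: eqm_sig.
  by apply: eqm_mul => //; apply: eqm_sig.
- elim=> [|M IH].
    rewrite big_ord1 /L2 /d2 !sig_u !muln0 qq0; ring.
  rewrite big_ord_recr IH /= /L2 !sig_u mul1n.
  apply/eqP; rewrite -subr_eq0; apply/eqP.
  transitivity (d2 M + u M.+1 * (1 - qq M.+1)); first by rewrite /d2 mulnS qqD; ring.
  by rewrite u_rec /d2; ring.
- move=> M; rewrite /d2 -(subr0 0); apply: eqm_sub.
    rewrite (_ : M.+1 = 1 + M)%N //.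
    apply: eqm_mul0; first exact: eqm_mono.
    exact: u_deg.
  rewrite -!mulrA (_ : M.+1 = 1 + (0 + (0 + M)))%N //.
  apply: eqm_mul0; first exact: eqm_mono.
  apply: eqm_mul0; first exact: eqm0.
  by apply: eqm_mul0; [exact: eqm0|exact: u_deg].
Qed.

End S2.

Lemma series1E k : series1 k = s_inv (Qinf 1) * A1 k.
Proof.
rewrite /series1 (_ : s_mul s_y (s_q 1) = s_mono 1 1 0 1) //.
by rewrite mulE /s_y /s_q mono_mul.
Qed.

Lemma series2E k : series2 k = Qinf (-1) * A2 k.
Proof.
rewrite /series2 (_ : s_opp (s_mul s_y (s_q 1)) = s_mono (-1) 1 0 1) //.
by rewrite mulE oppE /s_y /s_q mono_mul mono_opp.
Qed.

Lemma YZ : s_mono 1 1 1 1 = Yq * Zm :> S.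
Proof. by rewrite /Yq /Zm mono_mul. Qed.

Lemma eqy_A1 k : eqy (A1 k) 1.
Proof.
move=> m n; rewrite /A1 /qlim sumP big_ord_recl big1 ?addr0 => [|i _].
  by rewrite /t1 K0 mulr1 expr0.
by rewrite /t1 mono_mulE.
Qed.

Lemma eqy_A2 k : eqy (A2 k) 1.
Proof.
move=> m n; rewrite /A2 /qlim sumP big_ord_recl big1 ?addr0 => [|i _].
  by rewrite /u K0 mulr1 expr0.
by rewrite /u mono_mulE.
Qed.

Lemma part1 k : nonneg (series1 k).
Proof.
rewrite series1E.
set P := s_inv (Qinf 1).
have hP : P * Qinf 1 = 1 by apply: s_invP; apply: Qinf_eqm1.
have sigP a : sig a P = P * Qp 1 a.
  apply: (@inv_unique _ _ (sig a (Qinf 1))).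
    by rewrite -rmorphM hP rmorph1.
  by rewrite -mulrA -Qinf_sig.
apply: (@final_ind _ (Hinv (k + 1)) (k + 1)).
- move=> m n.
  have h : eqy (P * A1 k) (1 * 1).
    apply: eqy_mul; last exact: eqy_A1.
    move=> m' n'; have := @eqy_mul P P (Qinf 1) 1 (fun _ _ => erefl) (eqy_Qinf 1) m' n'.
    by rewrite hP mulr1 => <-.
  by rewrite h mulr1; apply: nonneg1.
- exact: Hinv_nonneg.
- rewrite !rmorphM /= !sigP YZ.
  have hH := HinvP (k + 1).
  have hQ1 : Qp 1 1 = 1 - Yq by rewrite /Qp big_ord1.
  rewrite hQ1 {1}(A1_fun k).
  apply/eqP; rewrite -subr_eq0; apply/eqP.
  set H := Hinv (k + 1) in hH *; set Q := Qp 1 (k + 1) in hH *.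
  transitivity (P * (Yq * Zm) * sig (k + 1) (A1 k) * (1 - H * Q)); first by ring.
  by rewrite hH subrr mulr0.
Qed.

Lemma part2 k : (1 <= k)%N -> nonneg (series2 k).
Proof.
move=> hk; rewrite series2E.
set R := Qinf (-1).
have hR1 : R = (1 + Yq) * sig 1 R.
  by rewrite {1}/R (Qinf_sig (-1) 1) /Qp big_ord1 /Yq mono_opp opprK.
have hRk : sig 1 R = sig 1 (Qp (-1) (k - 1)) * sig k R.
  by rewrite {1}/R (Qinf_sig (-1) (k - 1)) rmorphM /= sig_sig add1n subn1 prednK.
apply: (@final_ind _ (sig 1 (Qp (-1) (k - 1))) k).
- move=> m n.
  have h : eqy (R * A2 k) (1 * 1).
    apply: eqy_mul; [exact: eqy_Qinf|exact: eqy_A2].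
  by rewrite h mulr1; apply: nonneg1.
- apply: nonneg_sig; apply: nonneg_prod => j _.
  rewrite -mono_opp opprK; apply: nonneg_add; [exact: nonneg1|exact: nonneg_mono].
- rewrite rmorphM /= YZ rmorphM /=.
  rewrite {1}hR1.
  rewrite [LHS](_ : _ = sig 1 R * ((1 + Yq) * A2 k)); last by ring.
  rewrite A2_fun hRk; ring.
Qed.

Theorem corollary1p8 (k : nat) (hk : (1 <= k)%N) (l m n : nat) :
  0 <= series1 k l m n /\ 0 <= series2 k l m n.
Proof. by split; [apply: part1 | apply: part2]. Qed.
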